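(* Let $\imath:V\hookrightarrow U$ be an inclusion of regular molecules with $\dim V=\dim U=1$. Then $\imath$ is a submolecule inclusion.
   Context: All posets are finite; $y$ covers $x$ if $x<y$ with nothing strictly between. A finite poset is graded if for each $x$ all maximal covering chains descending from $x$ have the same length $\dim x$; $U_n$ denotes elements of dimension $n$. An oriented graded poset is a finite graded poset with a label $\pm$ on each covering pair; $\Delta^\alpha x$ ($\nabla^\alpha x$) is the set of elements covered by (covering) $x$ with label $\alpha$. For closed (downward closed) $U$, with $\mathrm{cl}$ downward closure, $\max U$ maximal elements, $\dim U$ maximal dimension: $\Delta^\alpha_nU=\{x\in U_n:\nabla^{-\alpha}x\cap U=\emptyset\}$, $\partial^\alpha_nU=\mathrm{cl}(\Delta^\alpha_nU)\cup\bigcup_{k<n}\mathrm{cl}((\max U)_k)$ ($\emptyset$ for $n<0$), $\partial_nU=\partial^-_nU\cup\partial^+_nU$, subscript omitted for $n=\dim U-1$. Maps are functions with $f(\partial^\alpha_n\mathrm{cl}\{x\})=\partial^\alpha_n\mathrm{cl}\{f(x)\}$; inclusions are injective maps. $U\#_kV$ is the pushout of $U\hookleftarrow\partial^+_kU\cong\partial^-_kV\hookrightarrow V$; for $U,V$ of equal dimension $n$ with $\partial U\cong\partial V$ compatibly with $\partial^\pm$, $U\Rightarrow V$ is that pushout with a new element $\top$ of dimension $n+1$, $\Delta^-\top=U_n$, $\Delta^+\top=V_n$. $U$ is round if $\partial^-_nU\cap\partial^+_nU=\partial_{n-1}U$ for all $n<\dim U$. Regular molecules: smallest isomorphism-closed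 class containing the point, closed under $U\#_kV$ ($k<\min(\dim U,\dim V)$) and $U\Rightarrow V$ for round regular molecules of equal dimension. Submolecule inclusions: smallest class of inclusions of regular molecules containing all isomorphisms and the inclusions $U\hookrightarrow U\#_kV\hookleftarrow V$, closed under composition. *)

(* Defs.v *)
From HB Require Import structures.
From mathcomp Require Import all_boot all_order all_algebra.

Set Implicit Arguments.
Unset Strict Implicit.
Unset Printing Implicit Defensive.
Import Order.TTheory GRing.Theory Num.Theory.

(* An oriented graded poset, presented by its (finite) set of elements, its
   covering relation [cov x y] ("y covers x"), the orientation label [ori x y]
   of a covering pair (true = +, false = -; meaningless on non-covering pairs)
   and its dimension function.  The two axioms say exactly that the reflexive
   transitive closure of [cov] is a finite poset whose covering relation is
   [cov], which is graded with dimension function [dimf]: every maximal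
   descending covering chain from x has length [dimf x]. *)
Record ogp := OGP {
  pt :> finType;
  cov : rel pt;
  ori : pt -> pt -> bool;
  dimf : pt -> nat;
  dimf_cov : forall x y, cov x y -> dimf y = (dimf x).+1;
  dimf_min : forall x, (0 < dimf x)%N -> exists y, cov y x }.

Arguments cov {o}.
Arguments ori {o}.
Arguments dimf {o}.

Section Boundaries.
Variable P : ogp.

Definition le (x y : P) : bool := connect (@cov P) x y.
Definition lt (x y : P) : bool := (x != y) && le x y.

Definition closed (A : {set P}) : Prop :=
  forall x y, y \in A -> le x y -> x \in A.

Definition cl (A : {set P}) : {set P} := [set x | [exists y in A, le x y]].

Definition maxel (A : {set P}) : {set P} :=
  [set x in A | [forall y in A, ~~ lt x y]].

Definition dimset (A : {set P}) : int :=
  if A == set0 then (-1)%R else Posz (\max_(x in A) dimf x).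

Definition Delta (a : bool) (n : int) (A : {set P}) : {set P} :=
  [set x in A | (Posz (dimf x) == n) &&
     [forall y in A, ~~ (cov x y && (ori x y == ~~ a))]].

Definition bd (a : bool) (n : int) (A : {set P}) : {set P} :=
  if (n < 0)%R then set0
  else cl (Delta a n A) :|: cl [set x in maxel A | (Posz (dimf x) < n)%R].

Definition bd2 (n : int) (A : {set P}) : {set P} := bd false n A :|: bd true n A.

Definition ogp_dim : int := dimset [set: P].

Definition round : Prop :=
  forall n : int, (n < ogp_dim)%R ->
    bd false n [set: P] :&: bd true n [set: P] = bd2 (n - 1) [set: P].

End Boundaries.

Section Maps.
Variables P Q : ogp.

Definition is_map (f : P -> Q) : Prop :=
  forall (x : P) (a : bool) (n : int),
    f @: bd a n (cl [set x]) = bd a n (cl [set f x]).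

Definition inclusion (f : P -> Q) : Prop := is_map f /\ injective f.

(* f is an isomorphism of P onto the (closed) subset B of Q with its
   induced oriented graded poset structure *)
Definition iso_onto (f : P -> Q) (B : {set Q}) : Prop :=
  [/\ injective f,
      (forall x, f x \in B),
      (forall y, y \in B -> exists x, f x = y),
      (forall x y, cov (f x) (f y) = cov x y) &
      (forall x y, cov x y -> ori (f x) (f y) = ori x y)].

Definition iso (f : P -> Q) : Prop := iso_onto f [set: Q].

End Maps.

(* W (with coprojections i, j) is the pasting U #_k V, i.e. the pushout of
   U <- d^+_k U ~ d^-_k V -> V: W is the union of two closed subsets A, B,
   isomorphic to U and V respectively, meeting exactly in d^+_k A = d^-_k B. *)
Definition is_paste (k : nat) (U V W : ogp) (i : U -> W) (j : V -> W) : Prop :=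
  exists A B : {set W},
    closed A /\ closed B /\ A :|: B = [set: W] /\
    A :&: B = bd true (Posz k) A /\ A :&: B = bd false (Posz k) B /\
    iso_onto i A /\ iso_onto j B.

(* W is U => V (with n = dim U = dim V): W \ {top} is the pushout of
   U <- dU ~ dV -> V, the isomorphism of boundaries being compatible with
   d^- and d^+, and top covers exactly the n-dimensional elements, with
   label - on those of (the copy of) U and + on those of (the copy of) V. *)
Definition is_atom (U V W : ogp) (i : U -> W) (j : V -> W) : Prop :=
  exists (top : W) (A B : {set W}),
    let n := ogp_dim U in
    closed A /\ closed B /\ A :|: B = [set: W] :\ top /\
    A :&: B = bd2 (n - 1) A /\
    bd false (n - 1) A = bd false (n - 1) B /\
    bd true (n - 1) A = bd true (n - 1) B /\
    iso_onto i A /\ iso_onto j B /\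
    (forall x, cov x top = (x != top) && (Posz (dimf x) == n)) /\
    (forall x, x \in A -> cov x top -> ori x top = false) /\
    (forall x, x \in B -> cov x top -> ori x top = true) /\
    (forall y, ~~ cov top y).

Inductive regmol : ogp -> Prop :=
| rm_point (P : ogp) : #|P| = 1%N -> regmol P
| rm_iso (P Q : ogp) (f : P -> Q) : regmol P -> iso f -> regmol Q
| rm_paste (U V W : ogp) (k : nat) (i : U -> W) (j : V -> W) :
    regmol U -> regmol V ->
    (Posz k < ogp_dim U)%R -> (Posz k < ogp_dim V)%R ->
    is_paste k i j -> regmol W
| rm_atom (U V W : ogp) (i : U -> W) (j : V -> W) :
    regmol U -> regmol V -> round U -> round V ->
    ogp_dim U = ogp_dim V -> is_atom i j -> regmol W.

Inductive sub_incl : forall U W : ogp, (U -> W) -> Prop :=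
| si_iso (U W : ogp) (f : U -> W) :
    regmol U -> regmol W -> iso f -> sub_incl f
| si_left (U V W : ogp) (k : nat) (i : U -> W) (j : V -> W) :
    regmol U -> regmol V ->
    (Posz k < ogp_dim U)%R -> (Posz k < ogp_dim V)%R ->
    is_paste k i j -> sub_incl i
| si_right (U V W : ogp) (k : nat) (i : U -> W) (j : V -> W) :
    regmol U -> regmol V ->
    (Posz k < ogp_dim U)%R -> (Posz k < ogp_dim V)%R ->
    is_paste k i j -> sub_incl j
| si_comp (U V W : ogp) (f : U -> V) (g : V -> W) :
    sub_incl f -> sub_incl g -> sub_incl (g \o f).

(* Main.v *)
Require Import Defs.
From mathcomp Require Import all_boot all_order all_algebra.
From mathcomp Require Import zify.
Set Implicit Arguments. Unset Strict Implicit. Unset Printing Implicit Defensive.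
From Stdlib Require Import FunctionalExtensionality.

Section Gen.
Variable P : ogp.
Implicit Types x y : P.

Lemma path_dim x p : path (@cov P) x p -> dimf (last x p) = dimf x + size p.
Proof.
elim: p x => [|z p IH] x /=; first by rewrite addn0.
case/andP=> hxz hp. rewrite IH // (dimf_cov hxz) addSnnS. by [].
Qed.

Lemma le_dim x y : Defs.le x y -> x = y \/ dimf x < dimf y.
Proof.
move/connectP=> [p hp ->]. case: p hp => [|z p] hp; [by left| right].
rewrite path_dim //= addnS ltnS leq_addr //.
Qed.

Definition low := forall x : P, dimf x <= 1.

Lemma le_low (hl : low) x y : Defs.le x y = (x == y) || cov x y.
Proof.
apply/idP/idP.
- move/connectP=> [p hp ->]. case: p hp => [|z [|w p]] /=.
  + by rewrite eqxx.
  + by rewrite andbT => ->; rewrite orbT.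
  + case/and3P => h1 h2 _. have := hl w. by rewrite (dimf_cov h2) (dimf_cov h1).
- case/orP => [/eqP -> | h]; [exact: connect0 | exact: connect1].
Qed.

Lemma cl1 x : cl [set x] = [set y | Defs.le y x].
Proof.
apply/setP=> y; rewrite !inE; apply/existsP/idP => [[z /andP[]]|h].
  by rewrite inE => /eqP ->.
by exists x; rewrite inE eqxx h.
Qed.

Lemma bd0 a (S : {set P}) : bd a 0 S = Delta a 0 S.
Proof.
rewrite /bd /=.
have -> : [set x in maxel S | (Posz (dimf x) < 0)%R] = set0.
  by apply/setP => x; rewrite !inE andbF.
have -> : cl (set0 : {set P}) = set0.
  apply/setP => x; rewrite !inE; apply/existsP => [[z]]; by rewrite inE.
rewrite setU0; apply/setP => y; rewrite inE; apply/existsP/idP => [[z /andP[zD hle]]|h].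
  have hz : dimf z = 0.
    move: zD; rewrite inE => /andP[_ /andP[/eqP hz _]]. by case: hz.
  case: (le_dim hle) => [-> //|]. by rewrite hz.
by exists y; rewrite h; exact: connect0.
Qed.

Lemma iso_dim (Q : ogp) (h : P -> Q) B : iso_onto h B -> Defs.closed B -> forall x, dimf (h x) = dimf x.
Proof.
case=> hinj hin hsur hcov hori hcl x.
move: {2}(dimf x) (erefl (dimf x)) => n; elim: n x => [|n IH] x hx.
  case hd: (dimf (h x)) => [//|d].
  have [y hy] : exists y : Q, cov y (h x) by apply: dimf_min; rewrite hd.
  have yB : y \in B by apply: (hcl y (h x) (hin x)); exact: connect1.
  have [z hz] := hsur y yB. rewrite -hz hcov in hy.
  by rewrite (dimf_cov hy) in hx.
have [y hy] : exists y, cov y x by apply: dimf_min; rewrite hx.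
have hy2 := dimf_cov hy. rewrite hx in hy2. move: hy2 => [hy2].
have hc : cov (h y) (h x) by rewrite hcov.
by rewrite (dimf_cov hc) (IH y (esym hy2)) hx hy2.
Qed.


End Gen.

Lemma Delta_transport (P Q : ogp) (h : P -> Q) a n (S : {set P}) :
  injective h -> (forall x y, cov (h x) (h y) = cov x y) ->
  (forall x y, cov x y -> ori (h x) (h y) = ori x y) ->
  (forall x, dimf (h x) = dimf x) -> h @: Delta a n S = Delta a n (h @: S).
Proof.
move=> hinj hcov hori hdim.
apply/setP => z; apply/imsetP/idP.
- case=> x; rewrite inE => /andP [xS /andP [hd hf]] ->.
  rewrite inE (imset_f h xS) /= hdim hd /=.
  apply/forallP => w; apply/implyP => /imsetP [y yS ->]. rewrite hcov.
  have := forallP hf y; rewrite yS /=. case hc: (cov x y) => //=; by rewrite hori.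
- rewrite inE => /andP[/imsetP [x xS ->] /andP[hd hf]]. exists x => //.
  rewrite inE xS -hdim hd /=. apply/forallP => y; apply/implyP => yS.
  have := forallP hf (h y); rewrite (imset_f h yS) /= hcov.
  case hc: (cov x y) => //=; by rewrite hori.
Qed.

Lemma iso_onto_comp (P R Q : ogp) (g : P -> R) (f : R -> Q) B :
  iso g -> iso_onto f B -> iso_onto (f \o g) B.
Proof.
case=> gi _ gs gc go [fi fin fs fc fo]; split.
- exact: inj_comp.
- by move=> x; apply: fin.
- move=> y yB; have [x <-] := fs y yB; have [z <-] := gs x (in_setT x). by exists z.
- by move=> x y /=; rewrite fc gc.
- by move=> x y hc /=; rewrite fo ?gc // go.
Qed.

Lemma iso_inv (P Q : ogp) (g : P -> Q) : iso g ->
  exists g' : Q -> P, [/\ cancel g g', cancel g' g & iso g'].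
Proof.
case=> gi _ gs gc go.
have [g' hg'] : exists g' : Q -> P, forall y, g (g' y) = y.
  apply: (@fin_all_exists Q (fun _ => P) (fun y x => g x = y)) => y; exact: gs y (in_setT y).
have c1 : cancel g g' by move=> x; apply: gi; rewrite hg'.
exists g'; split => //; split.
- exact: can_inj hg'.
- by move=> x; rewrite in_setT.
- by move=> x _; exists (g x).
- by move=> x y; rewrite -[in RHS](hg' x) -[in RHS](hg' y) gc.
- by move=> x y hc; rewrite -[in RHS](hg' x) -[in RHS](hg' y) go // -gc !hg'.
Qed.

Lemma ogp_dimE (P : ogp) d : (forall x : P, dimf x <= d) -> (exists x : P, dimf x = d) ->
  ogp_dim P = Posz d.
Proof.
move=> hle [x hx]. rewrite /ogp_dim /dimset.
have -> : ([set: P] == set0) = false by apply/negbTE/set0Pn; exists x.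
congr Posz. apply/eqP; rewrite eqn_leq; apply/andP; split.
  by apply/bigmax_leqP => y _.
rewrite -hx; exact: (leq_bigmax_cond _ (in_setT x)).
Qed.

Lemma ogp_dim_inv (P : ogp) d : ogp_dim P = Posz d ->
  (forall x : P, dimf x <= d) /\ exists x : P, dimf x = d.
Proof.
rewrite /ogp_dim /dimset; case: ifP => // hne [<-]; split.
  move=> x; exact: (leq_bigmax_cond _ (in_setT x)).
have hc : 0 < #|[set: P]| by rewrite card_gt0 hne.
have [x _ ->] := eq_bigmax_cond (fun x => dimf x) hc. by exists x.
Qed.

Lemma low_dim (P : ogp) : low P -> (ogp_dim P <= 1)%R.
Proof.
move=> hl; rewrite /ogp_dim /dimset; case: ifP => _ //.
rewrite lez_nat; by apply/bigmax_leqP => x _.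
Qed.

Lemma iso_cl1 (P Q : ogp) (h : P -> Q) (x : P) : iso h -> low P -> low Q ->
  h @: cl [set x] = cl [set h x].
Proof.
move=> [hi _ hs hc _] lP lQ; rewrite !cl1; apply/setP => z; rewrite inE le_low //.
apply/imsetP/idP.
- case=> y; rewrite inE le_low // => h1 ->. by rewrite hc (inj_eq hi).
- have [y <-] := hs z (in_setT z). rewrite hc (inj_eq hi) => h1.
  by exists y; rewrite // inE le_low.
Qed.

Definition mapD (P Q : ogp) (f : P -> Q) :=
  forall x a, f @: Delta a 0 (cl [set x]) = Delta a 0 (cl [set f x]).

Lemma iso_mapD (P Q : ogp) (h : P -> Q) : iso h -> low P -> low Q -> mapD h.
Proof.
move=> hiso lP lQ x a. have hd := iso_dim hiso (fun _ _ _ _ => in_setT _).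
case: (hiso) => hi _ _ hc ho.
by rewrite Delta_transport // iso_cl1.
Qed.

Lemma mapD_comp (P R Q : ogp) (g : P -> R) (f : R -> Q) : mapD g -> mapD f -> mapD (f \o g).
Proof. by move=> hg hf x a; rewrite imset_comp hg hf. Qed.

Lemma incl_mapD (P Q : ogp) (f : P -> Q) : inclusion f -> mapD f.
Proof. by case=> hm _ x a; rewrite -!bd0 hm. Qed.

Section LDef.
Variable m : nat.
Definition covL : rel 'I_(2 * m).+1 := fun p q => odd q && ((p.+1 == q) || (q.+1 == p)).
Definition oriL (p q : 'I_(2 * m).+1) : bool := q.+1 == p.
Definition dimL (p : 'I_(2 * m).+1) : nat := odd p.

Lemma covL_dim p q : covL p q -> dimL q = (dimL p).+1.
Proof.
rewrite /covL /dimL => /andP [oq /orP [/eqP e|/eqP e]].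
  by move: oq; rewrite -e /=; case: (odd p).
by move: oq; rewrite -e /=; case: (odd q).
Qed.

Lemma dimL_min p : 0 < dimL p -> exists q, covL q p.
Proof.
rewrite /dimL lt0b => op.
have p0 : 0 < p by case: (nat_of_ord p) op.
have hb : p.-1 < (2 * m).+1 by apply: leq_ltn_trans (ltn_ord p); exact: leq_pred.
exists (inord p.-1); rewrite /covL op inordK // prednK // eqxx //.
Qed.

Definition L : ogp := @OGP 'I_(2 * m).+1 covL oriL dimL covL_dim dimL_min.
End LDef.

Lemma covLE m (p q : L m) : cov p q = odd q && ((p.+1 == q) || (q.+1 == p)).
Proof. by []. Qed.
Lemma oriLE m (p q : L m) : ori p q = (q.+1 == p).
Proof. by []. Qed.
Lemma dimLE m (p : L m) : dimf p = odd p.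
Proof. by []. Qed.

Lemma L_low m : low (L m).
Proof. by move=> p; rewrite dimLE leq_b1. Qed.

Lemma le_L m (p q : L m) : Defs.le p q = (p == q) || cov p q.
Proof. exact: le_low (@L_low m) p q. Qed.

Definition Iv m lo hi : {set L m} := [set q : L m | (lo <= q) && (q <= hi)].

Lemma odd2 n : odd (2 * n) = false.
Proof. by rewrite oddM. Qed.

Lemma Iv_closed m lo hi : ~~ odd lo -> ~~ odd hi -> Defs.closed (Iv m lo hi).
Proof.
move=> ol oh x y; rewrite !inE le_L => /andP[h1 h2] /orP[/eqP->|]; first by rewrite h1 h2.
rewrite covLE => /andP [oy hxy].
have n1 : nat_of_ord y != lo by apply/eqP => e; rewrite -e oy in ol.
have n2 : nat_of_ord y != hi by apply/eqP => e; rewrite -e oy in oh.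
move: hxy n1 n2 h1 h2; case/orP => /eqP; lia.
Qed.

Lemma Delta_Iv m lo hi a (q : L m) : ~~ odd lo -> ~~ odd hi -> lo <= hi -> hi <= 2 * m ->
  (q \in Delta a 0 (Iv m lo hi)) = (nat_of_ord q == if a then hi else lo).
Proof.
move=> ol oh lh hm. rewrite inE !inE dimLE.
have -> : (Posz (odd q) == 0%R) = ~~ odd q by case: (odd q).
case: a.
- apply/idP/idP.
  + case/and3P => /andP[h1 h2] oq /forallP hf. apply/negPn/negP => hne.
    have hb : q.+1 < (2 * m).+1 by lia.
    have := hf (Ordinal hb). rewrite !inE covLE oriLE /= oq eqxx /=.
    have -> : (q.+2 == q) = false by lia.
    have h3 : (lo <= q.+1 <= hi) by lia.
    by rewrite h3.
  + move/eqP => e. rewrite e lh leqnn oh /=. apply/forallP => y; apply/implyP.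
    rewrite inE /covL /oriL /= ?eqbF_neg ?eqb_id => /andP[h1 h2].
    apply/negP => /andP[/andP[_ hc] ho]. move: hc ho; rewrite e.
    case/orP => /eqP; lia.
- apply/idP/idP.
  + case/and3P => /andP[h1 h2] oq /forallP hf. apply/negPn/negP => hne.
    have hb : q.-1 < (2 * m).+1 by lia.
    have q0 : 0 < q.
      case: (posnP q) => // q0; move: hne; rewrite q0; lia.
    have := hf (Ordinal hb). rewrite !inE covLE oriLE /= prednK // eqxx /=.
    have -> : odd q.-1 by move: oq; rewrite -{1}(prednK q0) oddS negbK.
    have h3 : (lo <= q.-1 <= hi) by lia.
    by rewrite orbT h3.
  + move/eqP => e. rewrite e lh leqnn ol /=. apply/forallP => y; apply/implyP.
    rewrite inE /covL /oriL /= ?eqbF_neg ?eqb_id => /andP[h1 h2].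
    apply/negP => /andP[/andP[_ hc] ho]. move: hc ho; rewrite e.
    case/orP => /eqP; lia.
Qed.

Lemma ord_le m (p : L m) : nat_of_ord p <= 2 * m.
Proof. by have := ltn_ord p; rewrite ltnS. Qed.

Lemma ord_odd_lt m (p : L m) : odd p -> nat_of_ord p < 2 * m.
Proof.
move=> op; have hp := ord_le p.
have : nat_of_ord p != 2 * m by apply/eqP=> e; move: op; rewrite e odd2.
lia.
Qed.

Lemma cl_L m (p : L m) : cl [set p] = Iv m (p - odd p) (p + odd p).
Proof.
rewrite cl1; apply/setP => q; rewrite !inE le_L covLE -val_eqE /=.
case: (odd p) => /=; apply/idP/idP; lia.
Qed.

Lemma Delta_cl_L m (p : L m) a :
  Delta a 0 (cl [set p]) = [set inord (if a then p + odd p else p - odd p) : L m].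
Proof.
have hp := ord_le p; have hp2 := @ord_odd_lt m p.
rewrite cl_L; apply/setP => q; rewrite Delta_Iv.
- rewrite inE -val_eqE /= inordK //; case: a; case: (odd p) hp2 => /= h; lia.
- case op: (odd p); last by rewrite subn0 op.
  by rewrite oddB ?op // lt0n; apply/eqP => e; move: op; rewrite e.
- by rewrite oddD; case: (odd p).
- lia.
- case: (odd p) hp2 => /= h; lia.
Qed.

Definition sh k m s (p : L k) : L m := inord (p + 2 * s).

Lemma sh_val k m s (p : L k) : s + k <= m -> nat_of_ord (sh m s p) = p + 2 * s.
Proof. move=> h; rewrite /sh inordK //; have := ord_le p; lia. Qed.

Lemma sh_iso_onto k m s : s + k <= m -> iso_onto (@sh k m s) (Iv m (2 * s) (2 * (s + k))).
Proof.
move=> h; split.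
- move=> p q /(congr1 val); rewrite /= !sh_val // => e; apply: val_inj => /=; lia.
- move=> p; rewrite inE sh_val //; have := ord_le p; lia.
- move=> y; rewrite inE => /andP[h1 h2].
  have hb : y - 2 * s < (2 * k).+1 by lia.
  exists (Ordinal hb); apply: val_inj; rewrite /= sh_val //=; lia.
- move=> p q; rewrite !covLE !sh_val // oddD odd2 addbF; congr andb.
  apply/idP/idP; lia.
- move=> p q _; rewrite !oriLE !sh_val //; apply/idP/idP; lia.
Qed.

Lemma dim_L0 : ogp_dim (L 0) = 0%R.
Proof.
apply: ogp_dimE => [p|]; last by exists ord0.
by rewrite dimLE; case: p => [[|n] hn].
Qed.

Lemma dim_L m : 0 < m -> ogp_dim (L m) = 1%R.
Proof.
move=> hm; apply: ogp_dimE => [p|]; first exact: L_low.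
have hb : 1 < (2 * m).+1 by lia.
by exists (Ordinal hb).
Qed.

Lemma paste_L a b : is_paste 0 (@sh a (a + b) 0) (@sh b (a + b) a).
Proof.
exists (Iv (a + b) (2 * 0) (2 * (0 + a))), (Iv (a + b) (2 * a) (2 * (a + b))).
have hA := @sh_iso_onto a (a + b) 0 (leq_addr _ _).
have hB := @sh_iso_onto b (a + b) a (leqnn _).
split; first by apply: Iv_closed; rewrite odd2.
split; first by apply: Iv_closed; rewrite odd2.
split.
  apply/setP => q; rewrite !inE; have := ord_le q; lia.
split.
  rewrite bd0; apply/setP => q; rewrite inE Delta_Iv ?odd2 //; try lia.
  rewrite !inE; apply/idP/idP; lia.
split.
  rewrite bd0; apply/setP => q; rewrite inE Delta_Iv ?odd2 //; try lia.
  have hq := ord_le q; rewrite !inE; apply/idP/idP; lia.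
by split.
Qed.

Lemma bd_neg (P : ogp) a (n : int) (S : {set P}) : (n < 0)%R -> bd a n S = set0.
Proof. by rewrite /bd => ->. Qed.

Lemma atom_L1 : is_atom (@sh 0 1 0) (@sh 0 1 1).
Proof.
have ht : 1 < (2 * 1).+1 by [].
exists (Ordinal ht), (Iv 1 (2 * 0) (2 * (0 + 0))), (Iv 1 (2 * 1) (2 * (1 + 0))).
rewrite dim_L0 /bd2 !bd_neg //.
have hA := @sh_iso_onto 0 1 0 isT.
have hB := @sh_iso_onto 0 1 1 isT.
split; first by apply: Iv_closed.
split; first by apply: Iv_closed.
split.
  apply/setP => q; rewrite !inE -val_eqE /=; have := ord_le q; case: q => [[|[|[|q]]] hq] //=.
split.
  apply/setP => q; rewrite !inE orbF; apply/negP; lia.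
do 4 (split; first by []).
split.
  move=> x; rewrite covLE -val_eqE /=; case: x => [[|[|[|q]]] hq] //=.
split.
  by move=> x; rewrite inE covLE oriLE => /andP[h1 h2] _ /=; lia.
split.
  by move=> x; rewrite inE covLE oriLE => /andP[h1 h2] _ /=; lia.
move=> y; rewrite covLE /=; have := ord_le y; case: y => [[|[|[|q]]] hq] //=.
Qed.

Lemma round_L0 : round (L 0).
Proof. move=> n; rewrite dim_L0 => hn; rewrite /bd2 !bd_neg ?setI0 ?setU0 //; lia. Qed.

Lemma regmol_L m : regmol (L m).
Proof.
elim: m => [|m IH].
  apply: rm_point; by rewrite card_ord.
case: m IH => [|m] IH.
  apply: (rm_atom _ _ round_L0 round_L0 erefl atom_L1); apply: rm_point; by rewrite card_ord.
have h1 : regmol (L 1).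
  apply: (rm_atom _ _ round_L0 round_L0 erefl atom_L1); apply: rm_point; by rewrite card_ord.
have := rm_paste IH h1 _ _ (paste_L m.+1 1).
rewrite addn1 dim_L // dim_L //; by apply.
Qed.

Definition covN (p q : nat) := odd q && ((p.+1 == q) || (q.+1 == p)).

Lemma covN_shift p q s : 2 * s <= p -> 2 * s <= q -> covN (p - 2 * s) (q - 2 * s) = covN p q.
Proof.
move=> hp hq; rewrite /covN oddB // odd2 addbF; congr andb; apply/idP/idP; lia.
Qed.

Lemma covN_far p q s : p < 2 * s -> 2 * s < q -> covN p q = false /\ covN q p = false.
Proof. move=> hp hq; rewrite /covN; split; apply/negP => /andP[_]; lia. Qed.

Lemma covN_near p q s : covN p q -> (p <= 2 * s /\ q <= 2 * s) \/ (2 * s <= p /\ 2 * s <= q).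
Proof.
rewrite /covN => /andP[oq h].
have : q != 2 * s by apply/eqP => e; move: oq; rewrite e odd2.
lia.
Qed.

Lemma cov_irr (P : ogp) (x : P) : cov x x = false.
Proof. apply/negP => h; have := dimf_cov h; lia. Qed.

Lemma L0_eq (p q : L 0) : p = q.
Proof. by apply: val_inj; case: p q => [[|p] hp] [[|q] hq]. Qed.

Lemma iso_onto_image (P Q : ogp) (h : P -> Q) B : iso_onto h B -> h @: setT = B.
Proof.
case=> _ hin hs _ _; apply/setP => y; apply/imsetP/idP => [[x _ ->] //|/hs [x <-]].
by exists x.
Qed.

Lemma Delta_L_T a m : Delta a 0 [set: L m] = [set inord (if a then 2 * m else 0) : L m].
Proof.
have -> : [set: L m] = Iv m 0 (2 * m) by apply/setP => q; rewrite !inE ord_le.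
apply/setP => q; rewrite Delta_Iv ?odd2 //.
rewrite inE -val_eqE /= inordK //; case: a => //; lia.
Qed.

Lemma closedT (P : ogp) : Defs.closed [set: P].
Proof. by move=> x y _ _; rewrite in_setT. Qed.

Lemma set1_eq (T : finType) (x y : T) : [set x] = [set y] -> x = y.
Proof. by move/setP/(_ x); rewrite !inE eqxx => /esym/eqP. Qed.


Lemma inordL m n : n <= 2 * m -> nat_of_ord (inord n : L m) = n.
Proof. by move=> h; rewrite inordK // ltnS. Qed.

Lemma glue (W : ogp) (A B : {set W}) a b (h1 : L a -> W) (h2 : L b -> W) :
  Defs.closed A -> Defs.closed B -> A :|: B = setT ->
  iso_onto h1 A -> iso_onto h2 B ->
  A :&: B = [set h1 (inord (2 * a))] -> A :&: B = [set h2 (inord 0)] ->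
  exists g : L (a + b) -> W, iso g.
Proof.
move=> cA cB hU [i1 in1 s1 c1 o1] [i2 in2 s2 c2 o2] hI1 hI2.
pose h1' p := h1 (inord p). pose h2' p := h2 (inord p).
have hc1 : forall p q, p <= 2 * a -> q <= 2 * a -> cov (h1' p) (h1' q) = covN p q.
  by move=> p q hp hq; rewrite /h1' c1 covLE !inordL.
have hc2 : forall p q, p <= 2 * b -> q <= 2 * b -> cov (h2' p) (h2' q) = covN p q.
  by move=> p q hp hq; rewrite /h2' c2 covLE !inordL.
have ho1 : forall p q, p <= 2 * a -> q <= 2 * a -> covN p q -> ori (h1' p) (h1' q) = (q.+1 == p).
  by move=> p q hp hq hc; rewrite /h1' o1 ?covLE ?oriLE !inordL.
have ho2 : forall p q, p <= 2 * b -> q <= 2 * b -> covN p q -> ori (h2' p) (h2' q) = (q.+1 == p).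
  by move=> p q hp hq hc; rewrite /h2' o2 ?covLE ?oriLE !inordL.
have inI : forall y, y \in A -> y \in B -> y \in A :&: B by move=> y ya yb; rewrite inE ya yb.
have mix1 : forall p q, p <= 2 * a -> h1' p = h2' q -> p = 2 * a.
  move=> p q hp e; have hb : h1' p \in B by rewrite e; apply: in2.
  have := inI _ (in1 (inord p)) hb; rewrite hI1 inE => /eqP /i1 /(congr1 (@nat_of_ord _)).
  by rewrite !inordL.
have mix2 : forall p q, q <= 2 * b -> h1' p = h2' q -> q = 0.
  move=> p q hq e; have ha : h2' q \in A by rewrite -e; apply: in1.
  have := inI _ ha (in2 (inord q)); rewrite hI2 inE => /eqP /i2 /(congr1 (@nat_of_ord _)).
  by rewrite !inordL.
have cl1 : forall p q, p <= 2 * a -> cov (h1' p) (h2' q) -> p = 2 * a.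
  move=> p q hp hc.
  have hb : h1' p \in B by apply: (cB _ (h2' q) (in2 _)); exact: connect1.
  have := inI _ (in1 (inord p)) hb; rewrite hI1 inE => /eqP /i1 /(congr1 (@nat_of_ord _)).
  by rewrite !inordL.
have cl2 : forall p q, q <= 2 * b -> cov (h2' q) (h1' p) -> q = 0.
  move=> p q hq hc.
  have ha : h2' q \in A by apply: (cA _ (h1' p) (in1 _)); exact: connect1.
  have := inI _ ha (in2 (inord q)); rewrite hI2 inE => /eqP /i2 /(congr1 (@nat_of_ord _)).
  by rewrite !inordL.
have join : h1' (2 * a) = h2' 0.
  apply: set1_eq; by rewrite -hI1 -hI2.
pose G (p : L (a + b)) := if nat_of_ord p <= 2 * a then h1' p else h2' (p - 2 * a).
have GA : forall p : L (a + b), p <= 2 * a -> G p = h1' p by move=> p hp; rewrite /G hp.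
have GB : forall p : L (a + b), 2 * a <= p -> G p = h2' (p - 2 * a).
  move=> p hp; rewrite /G; case: ifP => // hp2.
  have -> : nat_of_ord p = 2 * a by lia.
  by rewrite join subnn.
exists G; split.
- move=> p q e; apply: val_inj => /=.
  have hp := ord_le p; have hq := ord_le q.
  case: (leqP p (2 * a)) => hpa; case: (leqP q (2 * a)) => hqa.
  + move: e; rewrite !GA // => /i1 /(congr1 (@nat_of_ord _)); by rewrite !inordL //.
  + move: e; rewrite GA // GB ?(ltnW hqa) // => /mix2 h.
    have := h ltac:(lia). lia.
  + move: e; rewrite GB ?(ltnW hpa) // GA // => /esym /mix2 h.
    have := h ltac:(lia). lia.
  + move: e; rewrite !GB ?(ltnW hpa) ?(ltnW hqa) // => /i2 /(congr1 (@nat_of_ord _)).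
    rewrite !inordL; lia.
- by move=> y; rewrite in_setT.
- move=> y _; have : y \in A :|: B by rewrite hU in_setT.
  case/setUP => [/s1 [x <-]|/s2 [x <-]].
  + have hx := ord_le x.
    have hb : nat_of_ord x < (2 * (a + b)).+1 by lia.
    exists (Ordinal hb); rewrite GA //= /h1'; congr h1; apply: val_inj; rewrite /= inordL //.
  + have hx := ord_le x.
    have hb : nat_of_ord x + 2 * a < (2 * (a + b)).+1 by lia.
    exists (Ordinal hb); rewrite GB /= ?leq_addl // /h2'; congr h2; apply: val_inj.
    rewrite /= inordL addnK //.
- move=> p q; rewrite covLE -/(covN p q).
  have hp := ord_le p; have hq := ord_le q.
  have : [\/ (p <= 2 * a) && (q <= 2 * a), (2 * a <= p) && (2 * a <= q),
             (p < 2 * a) && (2 * a < q) | (q < 2 * a) && (2 * a < p)] by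
    case: (leqP p (2 * a)); case: (leqP q (2 * a)); case: (ltngtP p (2 * a)); case: (ltngtP q (2 * a)); move=> *;
    solve [ apply: Or41; apply/andP; split; lia | apply: Or42; apply/andP; split; lia
          | apply: Or43; apply/andP; split; lia | apply: Or44; apply/andP; split; lia ].
  case => /andP [h3 h4].
  + by rewrite !GA // hc1.
  + rewrite !GB // hc2 ?covN_shift //; lia.
  + rewrite GA ?(ltnW h3) // GB ?(ltnW h4) //. have [-> _] := covN_far h3 h4.
    apply/negP => /cl1 h; have := h (ltnW h3); lia.
  + rewrite GB ?(ltnW h4) // GA ?(ltnW h3) //. have [_ ->] := covN_far h3 h4.
    apply/negP => /cl2 h; have := h ltac:(lia); lia.
- move=> p q; rewrite covLE oriLE -/(covN p q) => hc.
  have hp := ord_le p; have hq := ord_le q.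
  case: (covN_near a hc) => [[h3 h4]|[h3 h4]].
  + by rewrite !GA // ho1.
  + rewrite !GB // ho2 ?covN_shift //; lia.
Qed.

Lemma three (W : ogp) (p0 top p1 : W) : p0 != top -> p1 != top -> p0 != p1 ->
  (forall w, [\/ w = p0, w = top | w = p1]) -> cov p0 top -> cov p1 top ->
  ~~ cov top p0 -> ~~ cov top p1 -> ~~ cov p0 p1 -> ~~ cov p1 p0 ->
  ori p0 top = false -> ori p1 top = true -> exists g : L 1 -> W, iso g.
Proof.
move=> n0 n1 n01 hw c0 c1 t0 t1 c01 c10 o0 o1.
pose G (p : L 1) := if nat_of_ord p == 0 then p0 else if nat_of_ord p == 1 then top else p1.
have hG : forall p : L 1, [\/ nat_of_ord p = 0 /\ G p = p0, nat_of_ord p = 1 /\ G p = top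
                           | nat_of_ord p = 2 /\ G p = p1].
  by move=> [[|[|[|p]]] hp]; [apply: Or31|apply: Or32|apply: Or33|].
have n0' : top != p0 by rewrite eq_sym.
have n1' : top != p1 by rewrite eq_sym.
have n01' : p1 != p0 by rewrite eq_sym.
exists G; split.
- move=> p q e; apply: val_inj.
  case: (hG p) => [[vp ep]|[vp ep]|[vp ep]]; case: (hG q) => [[vq eq]|[vq eq]|[vq eq]];
  rewrite /= vp vq // ; move/eqP: e; rewrite ep eq ?(negbTE n0) ?(negbTE n1) ?(negbTE n01);
  by rewrite ?(negbTE n0') ?(negbTE n1') ?(negbTE n01').
- by move=> y; rewrite in_setT.
- have e0 : 0 < (2 * 1).+1 by []. have e1 : 1 < (2 * 1).+1 by []. have e2 : 2 < (2 * 1).+1 by [].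
  move=> w _; case: (hw w) => ->; [exists (Ordinal e0)|exists (Ordinal e1)|exists (Ordinal e2)]; by [].
- move=> p q; rewrite covLE.
  case: (hG p) => [[vp ep]|[vp ep]|[vp ep]]; case: (hG q) => [[vq eq]|[vq eq]|[vq eq]];
  rewrite ep eq vp vq /= ?cov_irr //; by apply/negbTE.
- move=> p q; rewrite covLE oriLE.
  case: (hG p) => [[vp ep]|[vp ep]|[vp ep]]; case: (hG q) => [[vq eq]|[vq eq]|[vq eq]];
  by rewrite ep eq vp vq.
Qed.

Lemma dim_nonempty (P : ogp) (x : P) : exists d, ogp_dim P = Posz d.
Proof.
rewrite /ogp_dim /dimset.
have -> : ([set: P] == set0) = false by apply/negbTE/set0Pn; exists x.
by eexists.
Qed.

Lemma classify (P : ogp) : regmol P -> low P -> exists m (g : L m -> P), iso g.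
Proof.
elim => {P}.
- move=> P hc _. have [x hx] := mem_card1 hc.
  have hy : forall y : P, y = x by move=> y; apply/eqP; rewrite -[_ == _]/(y \in pred1 x) -hx.
  exists 0, (fun _ => x); split.
  + by move=> p q _; apply: L0_eq.
  + by move=> p; rewrite in_setT.
  + by move=> y _; exists ord0; rewrite (hy y).
  + by move=> p q; rewrite cov_irr (L0_eq p q) cov_irr.
  + by move=> p q; rewrite (L0_eq p q) cov_irr.
- move=> P Q f _ IH hf lQ.
  have lP : low P by move=> x; rewrite -(iso_dim hf (@closedT Q)).
  have [m [g hg]] := IH lP. exists m, (f \o g). exact: iso_onto_comp.
- move=> U V W k i j rU IHU rV IHV hkU hkV [A [B [cA [cB [hU [hAB1 [hAB2 [iA iB]]]]]]]] lW.
  have lU : low U by move=> x; rewrite -(iso_dim iA cA).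
  have lV : low V by move=> x; rewrite -(iso_dim iB cB).
  have [a [g1 hg1]] := IHU lU. have [b [g2 hg2]] := IHV lV.
  have k0 : k = 0 by have := low_dim lU; move: hkU; lia.
  subst k.
  have H1 := iso_onto_comp hg1 iA. have H2 := iso_onto_comp hg2 iB.
  have d1 := iso_dim H1 cA. have d2 := iso_dim H2 cB.
  case: (H1) => i1 _ _ c1 o1. case: (H2) => i2 _ _ c2 o2.
  have [g hg] : exists g : L (a + b) -> W, iso g.
    apply: (glue cA cB hU H1 H2).
    + rewrite hAB1 bd0 -(iso_onto_image H1) -Delta_transport // Delta_L_T imset_set1 //.
    + rewrite hAB2 bd0 -(iso_onto_image H2) -Delta_transport // Delta_L_T imset_set1 //.
  by exists (a + b), g.
- move=> U V W i j rU IHU rV IHV roU roV hdim [top [A [B H]]] lW.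
  move: H => /= [cA [cB [hU [hAB [hb1 [hb2 [iA [iB [hcov [hoA [hoB htop]]]]]]]]]]].
  have lU : low U by move=> x; rewrite -(iso_dim iA cA).
  have lV : low V by move=> x; rewrite -(iso_dim iB cB).
  have [a [g1 hg1]] := IHU lU. have [b [g2 hg2]] := IHV lV.
  have [d hd] := dim_nonempty (g1 ord0).
  have [hdle [u hu]] := ogp_dim_inv hd.
  have hA : forall x, x \in A -> x != top.
    move=> x xA; have : x \in A :|: B by rewrite inE xA.
    by rewrite hU !inE => /andP[].
  have hB : forall x, x \in B -> x != top.
    move=> x xB; have : x \in A :|: B by rewrite inE xB orbT.
    by rewrite hU !inE => /andP[].
  case: (iA) => iinj iin isur _ _. case: (iB) => jinj jin jsur _ _.
  have di := iso_dim iA cA. have dj := iso_dim iB cB.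
  have cu : cov (i u) top by rewrite hcov hA // di hu hd eqxx.
  have d0 : d = 0 by have := lW top; rewrite (dimf_cov cu) di hu; lia.
  rewrite d0 in hdle hd.
  have [d' hd'] := dim_nonempty (g2 ord0).
  have [hdle' _] := ogp_dim_inv hd'.
  have d0' : d' = 0 by move: hd'; rewrite -hdim hd => -[<-].
  subst d'.
  have a0 : a = 0.
    case: a g1 hg1 => // a g1 hg1.
    have e1 : 1 < (2 * a.+1).+1 by lia.
    have := hdle (g1 (Ordinal e1)); rewrite (iso_dim hg1 (@closedT U)) dimLE //.
  have b0 : b = 0.
    case: b g2 hg2 => // b g2 hg2.
    have e2 : 1 < (2 * b.+1).+1 by lia.
    have := hdle' (g2 (Ordinal e2)); rewrite (iso_dim hg2 (@closedT V)) dimLE //.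
  subst a b.
  case: (hg1) => _ _ s1 _ _. case: (hg2) => _ _ s2 _ _.
  set p0 := i (g1 ord0). set p1 := j (g2 ord0).
  have eA : forall x, x \in A -> x = p0.
    move=> x /isur [y <-]; have [z <-] := s1 y (in_setT y). by rewrite /p0 (L0_eq z ord0).
  have eB : forall x, x \in B -> x = p1.
    move=> x /jsur [y <-]; have [z <-] := s2 y (in_setT y). by rewrite /p1 (L0_eq z ord0).
  have dp0 : dimf p0 = 0 by have := hdle (g1 ord0); rewrite /p0 di; case: dimf.
  have dp1 : dimf p1 = 0 by have := hdle' (g2 ord0); rewrite /p1 dj; case: dimf.
  have hd1 : (ogp_dim U - 1 < 0)%R by rewrite hd.
  have n01 : p0 != p1.
    apply/eqP => e; have : p0 \in A :&: B by rewrite inE {2}e iin jin.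
    by rewrite hAB /bd2 !bd_neg // setU0 inE.
  have [g hg] : exists g : L 1 -> W, iso g.
    apply: (three (hA _ (iin _)) (hB _ (jin _)) n01).
    + move=> w; case: (eqVneq w top) => [->|wt]; first by apply: Or32.
      have : w \in A :|: B by rewrite hU !inE wt.
      by case/setUP => [/eA ->|/eB ->]; [apply: Or31|apply: Or33].
    + by rewrite hcov hA ?iin // dp0 hd.
    + by rewrite hcov hB ?jin // dp1 hd.
    + exact: htop.
    + exact: htop.
    + by apply/negP => /dimf_cov; rewrite dp0 dp1.
    + by apply/negP => /dimf_cov; rewrite dp0 dp1.
    + by apply: hoA; rewrite ?iin // hcov hA ?iin // dp0 hd.
    + by apply: hoB; rewrite ?jin // hcov hB ?jin // dp1 hd.
  by exists 1, g.
Qed.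

Lemma shift_incl k m (G : L k -> L m) : 0 < k -> injective G -> mapD G ->
  exists s, s + k <= m /\ forall p, nat_of_ord (G p) = p + 2 * s.
Proof.
move=> k0 Gi GD.
have key : forall (p : L k) a, G (inord (if a then p + odd p else p - odd p)) =
                               inord (if a then G p + odd (G p) else G p - odd (G p)).
  move=> p a; apply: set1_eq; by rewrite -imset_set1 -!Delta_cl_L GD.
pose g n := nat_of_ord (G (inord n)).
have step : forall i, i < k -> [/\ g (2 * i).+1 = (g (2 * i)).+1, g (2 * i).+2 = (g (2 * i)).+2 & odd (g (2 * i).+1)].
  move=> i hi.
  have hb : (2 * i).+1 < (2 * k).+1 by lia.
  pose p := Ordinal hb.
  have hl : G (inord (2 * i)) = inord (G p - odd (G p)).
    by rewrite -(key p false) /= odd2 /= subn1.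
  have hr : G (inord (2 * i).+2) = inord (G p + odd (G p)).
    by rewrite -(key p true) /= odd2 /= addn1.
  have hgp := ord_le (G p). have hgo := @ord_odd_lt m (G p).
  have gp : g (2 * i).+1 = G p by rewrite /g -[(2 * i).+1]/(nat_of_ord p) inord_val.
  rewrite gp /g hl hr -gp.
  case og: (odd (G p)) hl hr hgo => hl hr hgo.
  - have hgo' := hgo isT. rewrite gp og /= !inordL /=; try lia. split => //; lia.
  - rewrite subn0 addn0 in hl hr.
    have := Gi _ _ (etrans hl (esym hr)) => /(congr1 (@nat_of_ord _)).
    rewrite !inordL; lia.
have ev : forall i, i <= k -> g (2 * i) = g 0 + 2 * i.
  elim => [|i IH] hi; first by rewrite muln0 addn0.
  have [_ h2 _] := step i hi. rewrite (_ : 2 * i.+1 = (2 * i).+2) ?h2 ?IH //; lia.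
have all : forall n, n <= 2 * k -> g n = g 0 + n.
  move=> n hn; rewrite -(odd_double_half n) -mul2n.
  case on: (odd n) => /=.
  - have h := step n./2 ltac:(lia). case: h => h1 _ _; rewrite add1n h1 ev; lia.
  - rewrite add0n ev; lia.
have g0e : ~~ odd (g 0).
  have [h1 _ h3] := step 0 k0. rewrite muln0 h1 /= in h3. by rewrite h3.
exists (g 0)./2; split.
  have := ord_le (G (inord (2 * k))). rewrite -/(g (2 * k)) ev //.
  have := odd_double_half (g 0); rewrite (negbTE g0e) add0n -mul2n; lia.
move=> p; rewrite -[G p](congr1 G (inord_val p)) -/(g p) all ?ord_le //.
have := odd_double_half (g 0); rewrite (negbTE g0e) add0n -mul2n; lia.
Qed.

Lemma iso_sh k : iso (@sh k k 0).
Proof.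
have h := @sh_iso_onto k k 0 (leqnn _).
have e : Iv k (2 * 0) (2 * (0 + k)) = [set: L k].
  by apply/setP => q; rewrite !inE ord_le.
by rewrite e in h.
Qed.

Lemma sub_incl_shift k m s : 0 < k -> s + k <= m -> sub_incl (@sh k m s).
Proof.
move=> k0 hm.
have rL := regmol_L. have dL := dim_L.
have d1 : forall n, 0 < n -> (Posz 0 < ogp_dim (L n))%R by move=> n hn; rewrite dL.
case: (posnP s) => [s0|sp]; case: (posnP (m - s - k)) => [r0|rp].
- subst s. have em : m = k by lia. subst m. apply: si_iso => //. exact: iso_sh.
- subst s. have em : m = k + (m - 0 - k) by lia. move: (m - 0 - k) rp em => r rp ->.
  exact: (si_left (rL k) (rL r) (d1 k k0) (d1 r rp) (paste_L k r)).
- have em : m = s + k by lia. subst m.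
  exact: (si_right (rL s) (rL k) (d1 s sp) (d1 k k0) (paste_L s k)).
- have em : m = s + (k + (m - s - k)) by lia. move: (m - s - k) rp em => r rp em. subst m.
  have -> : @sh k (s + (k + r)) s = @sh (k + r) (s + (k + r)) s \o @sh k (k + r) 0.
    apply: functional_extensionality => p; apply: val_inj => /=.
    have := ord_le p; rewrite !sh_val //; try lia.
  apply: si_comp.
  + exact: (si_left (rL k) (rL r) (d1 k k0) (d1 r rp) (paste_L k r)).
  + have hkr : 0 < k + r by lia.
    exact: (si_right (rL s) (rL (k + r)) (d1 s sp) (d1 _ hkr) (paste_L s (k + r))).
Qed.

Theorem proposition4p3 (U V : ogp) (f : V -> U) :
  regmol V -> regmol U -> inclusion f ->
  ogp_dim V = 1%R -> ogp_dim U = 1%R -> sub_incl f.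
Proof.
move=> rV rU hf dV dU.
have [lU _] := ogp_dim_inv dU. have [lV [v hv]] := ogp_dim_inv dV.
have [m [g hg]] := classify rU lU. have [k [h0 hh]] := classify rV lV.
have [g' [gc1 gc2 hg']] := iso_inv hg. have [h0' [hc1 hc2 hh']] := iso_inv hh.
have k0 : 0 < k.
  have := iso_dim hh (@closedT V) (h0' v). rewrite hc2 hv dimLE.
  case: (k) (h0' v) => // [[[|p] hp]] //.
pose G := g' \o f \o h0.
have Gi : injective G.
  apply: inj_comp; last by case: hh.
  apply: inj_comp; last by case: hf.
  by case: hg'.
have GD : mapD G.
  apply: mapD_comp; first exact: iso_mapD hh (@L_low k) lV.
  apply: mapD_comp; first exact: incl_mapD.
  exact: iso_mapD hg' lU (@L_low m).
have [s [hs hG]] := shift_incl k0 Gi GD.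
have ef : f = g \o (@sh k m s \o h0').
  apply: functional_extensionality => x /=.
  have -> : @sh k m s (h0' x) = G (h0' x) by apply: val_inj; rewrite /= sh_val // hG.
  by rewrite /G /= hc2 gc2.
rewrite ef; apply: si_comp; last exact: si_iso (regmol_L m) rU hg.
apply: si_comp; first exact: si_iso rV (regmol_L k) hh'.
exact: sub_incl_shift.
Qed.
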